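(* Let $X,Y\subseteq\Sigma^*$ be regular languages and let $d$ be the number of states of the minimal deterministic finite automaton recognizing $Y$. Then $\overrightarrow{\mathrm{AH}}_{\mathrm{ned}}(X,Y)\ge\frac{1}{d}\cdot\overrightarrow{\mathrm{AC}}(X,Y)$.
   Context: An edit path from $x$ to $y$ is a sequence $p=(a_1,b_1)\cdots(a_n,b_n)$ with $(a_i,b_i)\in(\Sigma\cup\{\varepsilon\})^2\setminus\{(\varepsilon,\varepsilon)\}$, $a_1\cdots a_n=x$, $b_1\cdots b_n=y$; $|p|=n$ and $\mathrm{wgt}(p)=|\{i:a_i\ne b_i\}|$. $\mathrm{ed}(x,y)=\min_p\mathrm{wgt}(p)$; $\mathrm{ned}(x,y)=\min_p\mathrm{wgt}(p)/|p|$ ($\mathrm{ned}(\varepsilon,\varepsilon)=0$). $\overrightarrow{\mathrm{AH}}_{\mathrm{ned}}(X,Y)=\lim_{k\to\infty}\sup_{x\in X,|x|\ge k}\inf_{y\in Y}\mathrm{ned}(x,y)$ and $\overrightarrow{\mathrm{AC}}(X,Y)=\lim_{n\to\infty}\sup_{x\in X,|x|\ge n}\inf_{y\in Y}\frac{\mathrm{ed}(x,y)}{|x|}$. *)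

(* Defs.v *)
From HB Require Import structures.
From mathcomp Require Import all_boot all_order all_algebra.
From mathcomp Require Import all_classical all_reals all_analysis.
Set Implicit Arguments. Unset Strict Implicit. Unset Printing Implicit Defensive.
Import Order.TTheory GRing.Theory Num.Theory.
Local Open Scope classical_set_scope.
Local Open Scope ring_scope.

Section EditDistance.
Variable Sigma : finType.
Variable R : realType.

(* An edit operation (a,b) with a,b in Sigma ∪ {ε}; None encodes ε. *)
Definition edit_op := (option Sigma * option Sigma)%type.

Definition is_edit_path (x y : seq Sigma) (p : seq edit_op) : Prop :=
  [/\ all (fun o => o != (None, None)) p,
      pmap id (map fst p) = x &
      pmap id (map snd p) = y].

Definition wgt (p : seq edit_op) : nat := count (fun o => o.1 != o.2) p.

Definition ed (x y : seq Sigma) : \bar R :=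
  ereal_inf [set ((wgt p)%:R : R)%:E | p in is_edit_path x y].

Definition ned (x y : seq Sigma) : \bar R :=
  if (x == [::]) && (y == [::]) then 0%E
  else ereal_inf [set ((wgt p)%:R / (size p)%:R : R)%:E | p in is_edit_path x y].

Definition AH_ned (X Y : set (seq Sigma)) : \bar R :=
  limn (fun k : nat =>
    ereal_sup [set ereal_inf [set ned x y | y in Y] | x in [set x | X x /\ (k <= size x)%N]]).

Definition AC_dir (X Y : set (seq Sigma)) : \bar R :=
  limn (fun n : nat =>
    ereal_sup [set ereal_inf [set (ed x y * ((size x)%:R^-1 : R)%:E)%E | y in Y]
              | x in [set x | X x /\ (n <= size x)%N]]).

End EditDistance.

Record dfa (Sigma : finType) := DFA {
  dfa_state : finType;
  dfa_start : dfa_state;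
  dfa_trans : dfa_state -> Sigma -> dfa_state;
  dfa_final : pred dfa_state }.

Definition dfa_accept (Sigma : finType) (A : dfa Sigma) (w : seq Sigma) : bool :=
  @dfa_final Sigma A (foldl (@dfa_trans Sigma A) (@dfa_start Sigma A) w).

Definition recognizes (Sigma : finType) (A : dfa Sigma) (L : set (seq Sigma)) : Prop :=
  forall w, L w <-> dfa_accept A w.

Definition regular (Sigma : finType) (L : set (seq Sigma)) : Prop :=
  exists A : dfa Sigma, recognizes A L.

Definition min_dfa_size (Sigma : finType) (L : set (seq Sigma)) (d : nat) : Prop :=
  (exists A : dfa Sigma, recognizes A L /\ #|@dfa_state Sigma A| = d) /\
  (forall A : dfa Sigma, recognizes A L -> (d <= #|@dfa_state Sigma A|)%N).

(* Main.v *)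
Require Import Defs.
From HB Require Import structures.
From mathcomp Require Import all_boot all_order all_algebra.
From mathcomp Require Import all_classical all_reals all_analysis.
From mathcomp Require Import zify ring lra.
Set Implicit Arguments. Unset Strict Implicit.
Import Order.TTheory GRing.Theory Num.Theory.
Local Open Scope classical_set_scope.
Local Open Scope ring_scope.
Section Comb.
Variable Sigma : finType.
Local Notation eop := (edit_op Sigma).
Definition ins (c : Sigma) : eop := (None, Some c).
Definition xs (p : seq eop) := pmap id (map fst p).
Definition ys (p : seq eop) := pmap id (map snd p).
Definition nz (p : seq eop) := all (fun o => o != (None, None)) p.

Lemma xs_cat a b : xs (a ++ b) = xs a ++ xs b.
Proof. by rewrite /xs map_cat pmap_cat. Qed.
Lemma ys_cat a b : ys (a ++ b) = ys a ++ ys b.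
Proof. by rewrite /ys map_cat pmap_cat. Qed.
Lemma xs_cons u r : xs (u :: r) = pmap id [:: u.1] ++ xs r.
Proof. by case: u => [[a|] b]. Qed.
Lemma ys_cons u r : ys (u :: r) = pmap id [:: u.2] ++ ys r.
Proof. by case: u => [a [b|]]. Qed.
Lemma wgt_cat (a b : seq eop) : wgt (a ++ b) = (wgt a + wgt b)%N.
Proof. by rewrite /wgt count_cat. Qed.
Lemma wgt_cons (u : eop) r : wgt (u :: r) = ((u.1 != u.2) + wgt r)%N.
Proof. by []. Qed.
Lemma ys_ins s : ys (map ins s) = s.
Proof. by elim: s => //= c s; rewrite /ys /= => ->. Qed.
Lemma xs_ins s : xs (map ins s) = [::].
Proof. by elim: s. Qed.
Lemma wgt_ins s : wgt (map ins s) = size s.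
Proof. by elim: s => //= c s; rewrite /wgt /= => ->. Qed.
Lemma nz_ins s : nz (map ins s).
Proof. by elim: s. Qed.

Lemma decomp p : nz p ->
  (exists s, p = map ins s) \/
  (exists s o r, p = map ins s ++ o :: r /\ o.1 != None).
Proof.
elim: p => [|o p IH]; first by left; exists [::].
rewrite /nz /= => /andP[ho hp].
case: o ho => [[a|] b] ho.
  by right; exists [::], (Some a, b), p.
case: b ho => [c|] // _.
case: (IH hp) => [[s ->]|[s [u [r [-> h]]]]].
  by left; exists (c :: s).
by right; exists (c :: s), u, r.
Qed.

Variable S : finType.
Variable trans : S -> Sigma -> S.

Lemma shorten (s : seq Sigma) q : exists s',
  [/\ (size s' < #|S|)%N, (size s' <= size s)%N & foldl trans q s' = foldl trans q s].
Proof.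
move: {2}(size s) (leqnn (size s)) => n; elim: n s => [|n IH] s hs.
  case: s hs => // _; exists [::]; split => //.
  by apply/card_gt0P; exists q.
case: (ltnP (size s) #|S|) => hsS.
  by exists s; split.
set st := [seq foldl trans q (take i s) | i <- iota 0 (size s).+1].
have : ~~ uniq st.
  apply/negP => /card_uniqP; rewrite size_map size_iota => h.
  have : (#|st| <= #|S|)%N by apply: max_card.
  rewrite h => /leq_trans /(_ hsS); by rewrite ltnn.
case/(uniqPn q) => i [j [hij hj]].
rewrite /st size_map size_iota in hj.
rewrite !(nth_map 0) ?size_iota ?(ltn_trans hij) // !nth_iota ?(ltn_trans hij) //.
rewrite !add0n => heq.
have hsz : (size (take i s ++ drop j s) <= n)%N.
  rewrite size_cat size_take size_drop.
  have hi : (i < size s)%N by apply: (leq_trans hij); rewrite -ltnS.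
  rewrite hi; lia.
case: (IH _ hsz) => s' [h1 h2 h3].
exists s'; split => //.
  by apply: (leq_trans h2); rewrite size_cat size_take size_drop; case: ifP => ?; lia.
rewrite h3 foldl_cat heq -foldl_cat cat_take_drop //.
Qed.

Lemma pump (p : seq eop) q : nz p -> exists p',
  [/\ nz p', xs p' = xs p, foldl trans q (ys p') = foldl trans q (ys p),
      (wgt p' + size p = wgt p + size p')%N /\ (size p' <= size p)%N
    & (size p' < #|S| * (size (xs p)).+1)%N].
Proof.
move: {2}(size p) (leqnn (size p)) => n; elim: n p q => [|n IH] p q hs hp.
  case: p hs hp => // _ _; exists [::]; split => //; rewrite muln1.
  by apply/card_gt0P; exists q.
have [[s Ep]|[s [u [r [Ep ho]]]]] := decomp hp; subst p.
  case: (shorten s q) => s' [h1 h2 h3].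
  exists (map ins s'); split; rewrite ?nz_ins ?xs_ins ?ys_ins ?wgt_ins ?size_map //.
  - split; lia.
  - by rewrite muln1.
have [hr hor] : nz r /\ u != (None, None).
  by move: hp; rewrite /nz all_cat /= => /and3P[].
case: (shorten s q) => s' [h1 h2 h3].
have hsr : (size r <= n)%N by move: hs; rewrite size_cat /= size_map; lia.
case: (IH r (foldl trans (foldl trans q s) (pmap id [:: u.2])) hsr hr) =>
  r' [g1 g2 g3 [g4 g5] g6].
exists (map ins s' ++ u :: r'); split.
- by rewrite /nz all_cat -/(nz (map ins s')) nz_ins /= hor.
- by rewrite !xs_cat !xs_cons !xs_ins g2.
- by rewrite !ys_cat !ys_cons !ys_ins !foldl_cat h3 g3.
- split.
    rewrite !wgt_cat !wgt_cons !wgt_ins !size_cat !size_map /=.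
    lia.
  rewrite !size_cat !size_map /=; lia.
- have -> : size (xs (map ins s ++ u :: r)) = (size (xs r)).+1.
    rewrite xs_cat xs_cons xs_ins /=.
    by case: u ho {hp hor g1 g2 g3 g4 g5 g6 hs hsr IH} => [[a|] b].
  by rewrite size_cat size_map /= mulnS -addSn; apply: leq_add.
Qed.
End Comb.
Lemma nat_ineq (w' L' L w n d : nat) : (0 < n)%N -> (w' <= L')%N -> (L' <= L)%N ->
  (w' + L = w + L')%N -> (L' < d * n.+1)%N -> (w' * L <= d * n * w + d * L)%N.
Proof.
move=> n0 h1 h2 h3 h4.
have hk : L = (L' + (L - L'))%N by lia.
move: (L - L')%N hk => kk hk; subst L.
have hw : w = (w' + kk)%N by lia.
subst w.
have a1 : (w' * L' <= w' * (d * n.+1))%N by apply: leq_mul => //; lia.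
have a2 : (w' * kk <= (d * n.+1) * kk)%N by apply: leq_mul => //; lia.
nia.
Qed.

Lemma real_ineq (R : realType) (w' L' L w n d : nat) : (0 < n)%N -> (0 < L)%N ->
  (w' <= L')%N -> (L' <= L)%N ->
  (w' + L = w + L')%N -> (L' < d * n.+1)%N ->
  (w'%:R / n%:R <= d%:R * (w%:R / L%:R + n%:R^-1) :> R).
Proof.
move=> n0 L0 h1 h2 h3 h4.
have N := @nat_ineq w' L' L w n d n0 h1 h2 h3 h4.
have nR : (0 < n%:R :> R) by rewrite ltr0n.
have LR : (0 < L%:R :> R) by rewrite ltr0n.
rewrite -subr_ge0.
have -> : d%:R * (w%:R / L%:R + n%:R^-1) - w'%:R / n%:R =
   ((d * n * w + d * L)%N%:R - (w' * L)%N%:R) / (n%:R * L%:R :> R).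
  rewrite !natrD !natrM; field.
  by apply/andP; split; rewrite gt_eqF.
apply: divr_ge0; last by rewrite mulr_ge0 // ltW.
by rewrite subr_ge0 ler_nat.
Qed.

Local Open Scope ereal_scope.

Lemma step1a (R : realType) (Sigma : finType) (Y : set (seq Sigma)) (A : dfa Sigma)
  (recA : recognizes A Y) x y p :
  Y y -> is_edit_path x y p -> (0 < size x)%N ->
  ereal_inf [set (ed R x y * ((size x)%:R^-1 : R)%:E)%E | y in Y] <=
  ((#|dfa_state A|%:R : R) * ((wgt p)%:R / (size p)%:R + (size x)%:R^-1))%:E.
Proof.
move=> Yy [hnz hx hy] n0.
have [p' [g1 g2 g3 [g4 g5] g6]] := pump (@dfa_trans _ A) (@dfa_start _ A) hnz.
have Yy' : Y (ys p').
  apply/recA; rewrite /dfa_accept g3.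
  by have /recA := Yy; rewrite /dfa_accept /ys hy.
have hp' : is_edit_path x (ys p') p'.
  by split => //; rewrite -/(xs p') g2 /xs hx.
apply: (@le_trans _ _ (ed R x (ys p') * ((size x)%:R^-1 : R)%:E)).
  by apply: ereal_inf_lbound; exists (ys p').
apply: (@le_trans _ _ (((wgt p')%:R : R)%:E * ((size x)%:R^-1 : R)%:E)).
  apply: lee_wpmul2r; first by rewrite lee_fin invr_ge0.
  by apply: ereal_inf_lbound; exists p'.
rewrite -EFinM lee_fin.
have hxp : (size x <= size p)%N.
  by rewrite -hx size_pmap count_map count_size.
have hL : (0 < size p)%N by apply: leq_trans hxp.
have hw : (wgt p' <= size p')%N by apply: count_size.
have g6' : (size p' < #|dfa_state A| * (size x).+1)%N by move: g6; rewrite /xs hx.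
exact: (@real_ineq R (wgt p') (size p') (size p) (wgt p) (size x) #|dfa_state A|).
Qed.

Lemma ned_ge0 (R : realType) (Sigma : finType) (x y : seq Sigma) : 0 <= ned R x y.
Proof.
rewrite /ned; case: ifP => // _.
apply: le_ereal_inf_tmp => _ [p _ <-].
by rewrite lee_fin divr_ge0.
Qed.

Lemma step1 (R : realType) (Sigma : finType) (Y : set (seq Sigma)) (A : dfa Sigma)
  (recA : recognizes A Y) x : (0 < size x)%N ->
  ereal_inf [set (ed R x y * ((size x)%:R^-1 : R)%:E)%E | y in Y] <=
  (#|dfa_state A|%:R : R)%:E * (ereal_inf [set ned R x y | y in Y] + ((size x)%:R^-1 : R)%:E).
Proof.
move=> n0.
have d0 : (0 < #|dfa_state A|)%N by apply/card_gt0P; exists (dfa_start A).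
have dR : (0 < #|dfa_state A|%:R :> R)%R by rewrite ltr0n.
have a0 : 0 <= ereal_inf [set ned R x y | y in Y].
  by apply: le_ereal_inf_tmp => _ [y _ <-]; apply: ned_ge0.
have xn : (x == [::]) = false by apply/eqP => h; rewrite h in n0.
case E : (ereal_inf [set ned R x y | y in Y]) a0 => [r| |] // a0.
- apply/lee_addgt0Pr => e e0.
  rewrite -EFinD.
  have : ereal_inf [set ned R x y | y in Y] < (r + e / #|dfa_state A|%:R)%:E.
    by rewrite E lte_fin ltrDl divr_gt0.
  case/ereal_inf_lt => _ [y Yy <-].
  rewrite /ned xn /=.
  case/ereal_inf_lt => _ [p hp <-].
  rewrite lte_fin => hlt.
  apply: le_trans (@step1a R _ _ _ recA _ _ _ Yy hp n0) _.
  rewrite lee_fin.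
  have -> : (#|dfa_state A|%:R * (r + (size x)%:R^-1) + e =
     #|dfa_state A|%:R * ((r + e / #|dfa_state A|%:R) + (size x)%:R^-1) :> R)%R.
    by field; rewrite !pnatr_eq0 -!lt0n n0 d0.
  apply: ler_wpM2l; first exact: ltW.
  by rewrite lerD2r ltW.
- by rewrite /= mulry gtr0_sg // mul1e leey.
Qed.

Theorem mainTheorem16 (R : realType) (Sigma : finType) (X Y : set (seq Sigma)) (d : nat) :
  regular X -> regular Y -> min_dfa_size Y d ->
  (((d%:R : R)^-1)%:E * AC_dir R X Y <= AH_ned R X Y)%E.
Proof.
move=> _ _ [[A [recA cardA]] _].
have d0 : (0 < d)%N by rewrite -cardA; apply/card_gt0P; exists (dfa_start A).
have dR : (0 < d%:R :> R)%R by rewrite ltr0n.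
set Af := fun k : nat => ereal_sup [set ereal_inf [set ned R x y | y in Y]
    | x in [set x | X x /\ (k <= size x)%N]].
set Cf := fun k : nat => ereal_sup [set ereal_inf [set (ed R x y * ((size x)%:R^-1 : R)%:E)%E | y in Y]
              | x in [set x | X x /\ (k <= size x)%N]].
have monoA : {homo Af : n m / (n <= m)%N >-> m <= n}.
  move=> n m nm; apply: ereal_sup_le; apply: image_subset => x [Xx hx].
  by split => //; apply: leq_trans hx.
have monoC : {homo Cf : n m / (n <= m)%N >-> m <= n}.
  move=> n m nm; apply: ereal_sup_le; apply: image_subset => x [Xx hx].
  by split => //; apply: leq_trans hx.
have -> : AH_ned R X Y = ereal_inf (range Af).
  exact: (cvg_lim (@ereal_hausdorff R) (ereal_nonincreasing_cvgn monoA)).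
have -> : AC_dir R X Y = ereal_inf (range Cf).
  exact: (cvg_lim (@ereal_hausdorff R) (ereal_nonincreasing_cvgn monoC)).
have step2 : forall k, (0 < k)%N -> Cf k <= (d%:R : R)%:E * (Af k + ((k%:R)^-1 : R)%:E).
  move=> k k0; apply: ge_ereal_sup => _ [x [Xx kx] <-].
  have n0 : (0 < size x)%N by apply: leq_trans kx.
  apply: le_trans (@step1 R _ _ _ recA _ n0) _.
  rewrite -cardA; apply: lee_wpmul2l; first by rewrite lee_fin.
  apply: leeD.
    by apply: ereal_sup_ubound; exists x.
  rewrite lee_fin lef_pV2 ?ler_nat // posrE ltr0n //.
apply: le_ereal_inf_tmp => _ [k _ <-].
apply/lee_addgt0Pr => e e0.
set m := maxn k.+1 (Num.Def.trunc (e^-1)).+1.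
have m0 : (0 < m)%N by rewrite leq_max ltn0Sn.
have me : ((m%:R)^-1 <= e :> R)%R.
  rewrite -(invrK e) lef_pV2 ?posrE ?invr_gt0 ?ltr0n //.
  apply: ltW; apply: lt_le_trans (truncnS_gt _) _.
  by rewrite ler_nat leq_maxr.
apply: (@le_trans _ _ (((d%:R : R)^-1)%:E * Cf m)).
  apply: lee_wpmul2l; first by rewrite lee_fin invr_ge0.
  by apply: ereal_inf_lbound; exists m.
apply: (@le_trans _ _ (((d%:R : R)^-1)%:E * ((d%:R : R)%:E * (Af m + ((m%:R)^-1 : R)%:E)))).
  apply: lee_wpmul2l; first by rewrite lee_fin invr_ge0.
  exact: step2.
rewrite muleA -EFinM mulVf ?gt_eqF // mul1e.
apply: leeD; last by rewrite lee_fin.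
by apply: monoA; rewrite leq_max leqnSn.
Qed.
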